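(* Let $\mathbf u:[0,T]\to(0,\infty)^N$ be a differentiable solution of the geometric flux-differencing scheme $\frac{d\mathbf u}{dt}+2WD\mathbf w=\mathbf 0$, where $w_i=\sqrt{a_iu_i}$, $W=\operatorname{diag}(\mathbf w)$, and let $\mathbf v:[0,T]\to\mathbb R^N$ solve the linearized equation $$\frac{d\mathbf v}{dt}+\operatorname{diag}(D\mathbf w)AW^{-1}\mathbf v+WDAW^{-1}\mathbf v=\mathbf 0,$$ with $\mathbf w=\mathbf w(t)$ built from $\mathbf u(t)$. Then $\mathbf z:=W^{-1}\mathbf v$ satisfies $\frac{d\mathbf z}{dt}+DA\mathbf z=\mathbf 0$, the quantity $\sum_iH_{ii}v_i^2/u_i$ is constant in time, and $$\|\mathbf v(t)\|_H^2\le\frac{\max_iu_i(t)}{\min_iu_i(0)}\,\|\mathbf v(0)\|_H^2\qquad\text{for all }t\in[0,T].$$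
   Context: $H=\operatorname{diag}(H_{ii})$, $H_{ii}>0$; $Q\in\mathbb R^{N\times N}$ with $Q+Q^T=0$; $D=H^{-1}Q$; $\mathbf a$ constant in time with $a_i>0$, $A=\operatorname{diag}(\mathbf a)$; $\|\mathbf v\|_H^2=\sum_iH_{ii}v_i^2$. *)

(* Defs.v *)
From HB Require Import structures.
From mathcomp Require Import all_boot all_order all_algebra.
From mathcomp Require Import all_classical all_reals all_analysis.
Set Implicit Arguments. Unset Strict Implicit. Unset Printing Implicit Defensive.
Import Order.TTheory GRing.Theory Num.Theory.
Local Open Scope ring_scope.

(* D = H^{-1} Q with H = diag(Hd) *)
Definition Dmat (R : realType) (N : nat) (Hd : 'I_N -> R) (Q : 'M[R]_N) : 'M[R]_N :=
  \matrix_(i, j) (Q i j / Hd i).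

Definition mv (R : realType) (N : nat) (M : 'M[R]_N) (x : 'I_N -> R) : 'I_N -> R :=
  fun i => \sum_(j < N) M i j * x j.

Definition Hnorm2 (R : realType) (N : nat) (Hd : 'I_N -> R) (x : 'I_N -> R) : R :=
  \sum_(i < N) Hd i * x i ^+ 2.

(* max_i x_i (N >= 1; value 0 when N = 0) *)
Definition vmax (R : realType) (N : nat) (x : 'I_N -> R) : R :=
  \big[Num.max/0]_(i < N) x i.
(* min_i x_i (default element vmax x is >= every x_i, so this is the true min
   for N >= 1) *)
Definition vmin (R : realType) (N : nat) (x : 'I_N -> R) : R :=
  \big[Num.min/vmax x]_(i < N) x i.

(* Main.v *)
Require Import Defs.
From HB Require Import structures.
From mathcomp Require Import all_boot all_order all_algebra.
From mathcomp Require Import all_classical all_reals all_analysis.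
From mathcomp Require Import ring lra.
Import Order.TTheory GRing.Theory Num.Theory.
Local Open Scope ring_scope.
Local Open Scope classical_set_scope.

Section H.
Variable R : realType.

Lemma vmax_ge (N : nat) (x : 'I_N -> R) i : x i <= vmax x.
Proof. by rewrite /vmax (bigD1 i) //= le_max lexx. Qed.

Lemma vmax_ge0 (N : nat) (x : 'I_N -> R) : 0 <= vmax x.
Proof. rewrite /vmax; elim/big_rec: _ => // i y _ hy; by rewrite le_max hy orbT. Qed.

Lemma vmin_le (N : nat) (x : 'I_N -> R) i : vmin x <= x i.
Proof. by rewrite /vmin (bigD1 i) //= ge_min lexx. Qed.

Lemma vmin_gt0 (N : nat) (x : 'I_N -> R) : (forall i, 0 < x i) -> (0 < N)%N -> 0 < vmin x.
Proof.
move=> hx N0; rewrite /vmin; elim/big_ind: _ => //=.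
- apply: (lt_le_trans (hx (Ordinal N0))); exact: vmax_ge.
- by move=> p q hp hq; rewrite lt_min hp.
Qed.

Lemma skew0 (N : nat) (Q : 'M[R]_N) (y : 'I_N -> R) : Q + Q^T = 0 ->
  \sum_(i < N) \sum_(j < N) y i * Q i j * y j = 0.
Proof.
move=> hQ.
have Qji i j : Q j i = - Q i j.
  have := congr1 (fun M : 'M[R]_N => M i j) hQ; rewrite !mxE => /eqP; rewrite addr_eq0 => /eqP ->.
  by rewrite opprK.
set S := (X in X = 0).
have : S = - S.
  rewrite {1}/S exchange_big /= /S -sumrN; apply: eq_bigr => i _.
  rewrite -sumrN; apply: eq_bigr => j _.
  by rewrite Qji; ring.
move=> h; lra.
Qed.

Lemma der_w (f : R -> R) (c t df : R) : 0 < c * f t -> is_derive t 1 f df ->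
  is_derive t 1 (fun s => Num.sqrt (c * f s)) ((2 * Num.sqrt (c * f t))^-1 * (c * df)).
Proof.
move=> hp hf.
have h1 : is_derive t 1 (c \*: f) (c *: df) by exact: is_deriveZ.
have hp' : 0 < (c \*: f) t by [].
have h2 := is_derive1_comp (is_derive1_sqrt hp') h1.
exact: h2.
Qed.

Lemma der_z (uf vf : R -> R) (c t du dv : R) : 0 < c * uf t ->
  is_derive t 1 uf du -> is_derive t 1 vf dv ->
  is_derive t 1 (fun s => (Num.sqrt (c * uf s))^-1 * vf s)
    ((Num.sqrt (c * uf t))^-1 * dv + vf t * (- (Num.sqrt (c * uf t)) ^- 2
       * ((2 * Num.sqrt (c * uf t))^-1 * (c * du)))).
Proof.
move=> hp hu hv.
have hw := @der_w uf c t du hp hu.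
have wn0 : Num.sqrt (c * uf t) != 0 by rewrite gt_eqF // sqrtr_gt0.
have hV := @is_deriveV R (fun s => Num.sqrt (c * uf s)) t _ _ wn0 hw.
have hM := is_deriveM hV hv.
exact: hM.
Qed.

Lemma cst_on (G : R -> R) (T : R) :
  (forall t, t \in `[0, T] -> is_derive t 1 G 0) ->
  forall t s : R, t \in `[0, T] -> s \in `[0, T] -> G t = G s.
Proof.
move=> hd.
have sub : forall t s x : R, t \in `[0, T] -> s \in `[0, T] -> x \in `[t, s]%R -> x \in `[0, T].
  move=> t s x; rewrite !inE /= !in_itv /= => /andP[t0 tT] /andP[s0 sT] /andP[tx xs].
  rewrite ?bnd_simp in tx xs.
  by rewrite (le_trans t0 tx) (le_trans xs sT).
move=> t s; wlog ts : t s / (t <= s)%R.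
  move=> H ht hs; case: (leP t s) => [/H|/ltW /H] h; first exact: h.
  by rewrite (h hs ht).
move=> ht hs.
have h1 : forall x, x \in `]t, s[%R -> is_derive x 1 G ((fun _ => 0) x).
  move=> x xI; apply: hd; apply: (sub t s) => //.
  move: xI; rewrite !inE /= => /andP[a b]; rewrite ?bnd_simp in a b.
  by apply/andP; rewrite ?bnd_simp !ltW.
have h2' : {in `[t, s]%R, forall x, derivable G x 1}.
  move=> x xI.
  by have [] := hd x (sub t s x ht hs xI).
have h2 := derivable_within_continuous h2'.
have [c _] := @MVT_segment R G (fun _ => 0) t s ts h1 h2.
by rewrite mul0r => /eqP; rewrite subr_eq0 => /eqP ->.
Qed.

End H.

Theorem mainTheorem6 (R : realType) (N : nat) (T : R)
    (Hd : 'I_N -> R) (Q : 'M[R]_N) (a : 'I_N -> R)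
    (u v : R -> 'I_N -> R) :
  (forall i, 0 < Hd i) ->
  Q + Q^T = 0 ->
  (forall i, 0 < a i) ->
  0 <= T ->
  (* u : [0,T] -> (0,oo)^N, differentiable, solving du/dt + 2 W D w = 0 *)
  (forall t, t \in `[0, T] -> forall i, 0 < u t i) ->
  (forall t, t \in `[0, T] -> forall i, derivable (fun s => u s i) t 1) ->
  (forall t, t \in `[0, T] -> forall i,
     derive1 (fun s => u s i) t
     + 2 * Num.sqrt (a i * u t i)
         * mv (Dmat Hd Q) (fun j => Num.sqrt (a j * u t j)) i = 0) ->
  (* v solves the linearized equation *)
  (forall t, t \in `[0, T] -> forall i, derivable (fun s => v s i) t 1) ->
  (forall t, t \in `[0, T] -> forall i,
     derive1 (fun s => v s i) t
     + mv (Dmat Hd Q) (fun j => Num.sqrt (a j * u t j)) i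
         * a i * (Num.sqrt (a i * u t i))^-1 * v t i
     + Num.sqrt (a i * u t i)
         * mv (Dmat Hd Q)
              (fun j => a j * (Num.sqrt (a j * u t j))^-1 * v t j) i = 0) ->
  let z := fun t i => (Num.sqrt (a i * u t i))^-1 * v t i in
  (* dz/dt + D A z = 0 *)
  (forall t, t \in `[0, T] -> forall i,
     derivable (fun s => z s i) t 1 /\
     derive1 (fun s => z s i) t + mv (Dmat Hd Q) (fun j => a j * z t j) i = 0) /\
  (* sum_i H_ii v_i^2 / u_i is constant in time *)
  (forall t s, t \in `[0, T] -> s \in `[0, T] ->
     \sum_(i < N) Hd i * v t i ^+ 2 / u t i
     = \sum_(i < N) Hd i * v s i ^+ 2 / u s i) /\
  (* energy bound *)
  (forall t, t \in `[0, T] ->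
     Hnorm2 Hd (v t) <= vmax (u t) / vmin (u 0) * Hnorm2 Hd (v 0)).
Proof.
move=> HdP Qskew aP T0 uP ud ueq vd veq z.
have wpos t i : t \in `[0, T] -> 0 < Num.sqrt (a i * u t i).
  by move=> tI; rewrite sqrtr_gt0 mulr_gt0 // uP.
have zder : forall t, t \in `[0, T] -> forall i,
    is_derive t 1 (fun s => z s i) (- mv (Dmat Hd Q) (fun j => a j * z t j) i).
  move=> t tI i.
  have hp : 0 < a i * u t i by rewrite mulr_gt0 // uP.
  have hu := derivableP (ud t tI i).
  have hv := derivableP (vd t tI i).
  have := @der_z _ (fun s => u s i) (fun s => v s i) (a i) t _ _ hp hu hv.
  move=> h; apply: (is_derive_eq h).
  have eu := ueq t tI i; have ev := veq t tI i.
  rewrite derive1E in eu; rewrite derive1E in ev.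
  have -> : (fun j => a j * z t j) = (fun j => a j * (Num.sqrt (a j * u t j))^-1 * v t j).
    by apply/funext => j; rewrite /z mulrA.
  move: eu ev.
  set du := 'D_1 (fun s => u s i) t; set dv := 'D_1 (fun s => v s i) t.
  set Dw := mv _ (fun j => Num.sqrt _) i; set Daz := mv _ _ i.
  have wn0 : Num.sqrt (a i * u t i) != 0 by rewrite gt_eqF // wpos.
  move: wn0; set wi := Num.sqrt (a i * u t i) => wn0 eu ev.
  have -> : du = - (2 * wi * Dw).
    by apply: (@addIr _ (2 * wi * Dw)); rewrite eu; ring.
  have -> : dv = - (Dw * a i * wi^-1 * v t i + wi * Daz).
    apply: (@addIr _ (Dw * a i * wi^-1 * v t i + wi * Daz)).
    by rewrite addrA ev; ring.
  by field.
split.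
  move=> t tI i; have h := zder t tI i; split; first by case: h.
  by rewrite derive1E (@derive_val _ _ _ _ _ _ _ h) addNr.
pose G := fun s => \sum_(i < N) Hd i * a i * (z s i * z s i).
have Gd : forall t, t \in `[0, T] -> is_derive t 1 G 0.
  move=> t tI.
  pose dz i := - mv (Dmat Hd Q) (fun j => a j * z t j) i.
  have hs : is_derive t 1 (\sum_(i < N) (fun s => Hd i * a i * (z s i * z s i)))
      (\sum_(i < N) (Hd i * a i) *: (z t i *: dz i + z t i *: dz i)).
    apply: is_derive_sum => i.
    have hz := zder t tI i.
    have hm := is_deriveM hz hz.
    exact: (is_deriveZ (Hd i * a i) hm).
  have eG : G = \sum_(i < N) (fun s => Hd i * a i * (z s i * z s i)).
    by rewrite fct_sumE.
  rewrite eG; apply: (is_derive_eq hs).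
  transitivity (-2 * \sum_(i < N) \sum_(j < N)
      (a i * z t i) * Q i j * (a j * z t j)); last first.
    by rewrite (@skew0 R N Q (fun j => a j * z t j) Qskew) mulr0.
  rewrite mulr_sumr; apply: eq_bigr => i _.
  have hS : \sum_(j < N) (a i * z t i) * Q i j * (a j * z t j)
      = (a i * z t i) * Hd i * mv (Dmat Hd Q) (fun j => a j * z t j) i.
    rewrite /mv mulr_sumr; apply: eq_bigr => j _; rewrite /Dmat mxE.
    by field; rewrite gt_eqF.
  rewrite hS /dz /GRing.scale /=; ring.
have Gc := @cst_on R G T Gd.
have FG : forall t, t \in `[0, T] ->
    \sum_(i < N) Hd i * v t i ^+ 2 / u t i = G t.
  move=> t tI; apply: eq_bigr => i _; rewrite /z.
  have hw := wpos t i tI.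
  have e : u t i = (Num.sqrt (a i * u t i)) ^+ 2 / a i.
    by rewrite sqr_sqrtr ?mulr_ge0 ?ltW ?uP //; field; rewrite gt_eqF.
  rewrite {1}e; move: hw; set w := Num.sqrt _ => hw.
  by field; rewrite !gt_eqF.
have h0 : (0 : R) \in `[0, T] by rewrite !inE /= !in_itv /= lexx T0.
have Fc : forall t, t \in `[0, T] ->
    \sum_(i < N) Hd i * v t i ^+ 2 / u t i
    = \sum_(i < N) Hd i * v 0 i ^+ 2 / u 0 i.
  by move=> t tI; rewrite FG // FG // (Gc t 0).
split.
  by move=> t s tI sI; rewrite Fc // (Fc s).
move=> t tI.
have [N0|Npos] := posnP N.
  by subst N; rewrite /Hnorm2 !big_ord0 mulr0 lexx.
have mpos : 0 < vmin (u 0) := @vmin_gt0 R N (u 0) (uP 0 h0) Npos.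
have st1 : Hnorm2 Hd (v t) <= vmax (u t) * \sum_(i < N) Hd i * v t i ^+ 2 / u t i.
  rewrite /Hnorm2 mulr_sumr; apply: ler_sum => i _.
  have utp := uP t tI i.
  have un0 : u t i != 0 by rewrite gt_eqF.
  rewrite -{1}(divfK un0 (Hd i * v t i ^+ 2)).
  rewrite [X in _ <= X]mulrC; apply: ler_wpM2l; last exact: vmax_ge.
  apply: divr_ge0; [apply: mulr_ge0; [exact: ltW | exact: sqr_ge0] | exact: ltW].
have st2 : \sum_(i < N) Hd i * v 0 i ^+ 2 / u 0 i <= Hnorm2 Hd (v 0) / vmin (u 0).
  rewrite /Hnorm2 mulr_suml; apply: ler_sum => i _.
  apply: ler_wpM2l; first by rewrite mulr_ge0 ?sqr_ge0 ?ltW.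
  by rewrite lef_pV2 ?posrE ?uP // vmin_le.
apply: (le_trans st1); rewrite Fc //.
rewrite -mulrA [X in _ <= _ * X]mulrC; apply: ler_wpM2l; first exact: vmax_ge0.
exact: st2.
Qed.
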